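(* Let $T$ be a tree on $n\ge7$ vertices such that every leaf $v$ of $T$ satisfies both $|N_2(v)|>\lceil n/2\rceil-4$ and $|N_{\ge4}(v)|<|N_2(v)|+4-\lceil n/2\rceil$. Then $T$ has diameter at most $3$.
   Context: For a vertex $v$ of a tree, $N_i(v)$ is the set of vertices at distance exactly $i$ from $v$ and $N_{\ge i}(v)$ the set of vertices at distance at least $i$ from $v$. The diameter of $T$ is the maximum distance between two of its vertices. *)

(* Defs.v *)
From mathcomp Require Import all_boot.
Set Implicit Arguments. Unset Strict Implicit. Unset Printing Implicit Defensive.

Definition simple_graph (T : finType) (e : rel T) : Prop :=
  symmetric e /\ irreflexive e.

Fixpoint ball (T : finType) (e : rel T) (v : T) (k : nat) : {set T} :=
  match k with
  | 0 => [set v]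
  | k'.+1 => ball e v k' :|: [set y | [exists z in ball e v k', e z y]]
  end.

Definition connected_graph (T : finType) (e : rel T) : Prop :=
  forall x y : T, exists k, y \in ball e x k.

Definition n_edges (T : finType) (e : rel T) : nat :=
  #|[set p : T * T | e p.1 p.2]| %/ 2.

Definition is_tree (T : finType) (e : rel T) : Prop :=
  simple_graph e /\ connected_graph e /\ 0 < #|T| /\ n_edges e = #|T| - 1.

Definition degree (T : finType) (e : rel T) (v : T) : nat := #|[set y | e v y]|.
Definition is_leaf (T : finType) (e : rel T) (v : T) : Prop := degree e v = 1.

Definition N_eq (T : finType) (e : rel T) (v : T) (i : nat) : {set T} :=
  match i with
  | 0 => [set v]
  | i'.+1 => ball e v i :\: ball e v i'
  end.

Definition N_ge (T : finType) (e : rel T) (v : T) (i : nat) : {set T} :=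
  match i with
  | 0 => [set: T]
  | i'.+1 => ~: ball e v i'
  end.

Definition diam_le (T : finType) (e : rel T) (d : nat) : Prop :=
  forall x y : T, y \in ball e x d.

(* Main.v *)
Require Import Defs.
From mathcomp Require Import all_boot all_order all_algebra.
From mathcomp Require Import zify.
Import GRing.Theory Num.Theory.
Set Implicit Arguments. Unset Strict Implicit. Unset Printing Implicit Defensive.

Section Tree.
Variables (T : finType) (e : rel T).
Hypothesis esym : symmetric e.
Hypothesis eirr : irreflexive e.
Hypothesis conn : connected_graph e.

Lemma ballS v k y : (y \in ball e v k.+1) = (y \in ball e v k) || [exists z in ball e v k, e z y].
Proof. by rewrite /= in_setU in_set. Qed.

Lemma ball_mono v k m : k <= m -> ball e v k \subset ball e v m.
Proof.
elim: m => [|m IH]; first by rewrite leqn0 => /eqP->.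
rewrite leq_eqVlt => /orP[/eqP->//|]; rewrite ltnS => /IH H.
apply: subset_trans H _; apply/subsetP=> y; rewrite ballS => ->; done.
Qed.

Definition dist x y : nat := @ex_minn (fun k => y \in ball e x k) (conn x y).

Lemma mem_ball x y k : (y \in ball e x k) = (dist x y <= k).
Proof.
rewrite /dist; case: ex_minnP => m Hm Hmin.
apply/idP/idP => [/Hmin//| H]. by move: (ball_mono x H) => /subsetP; apply. 
Qed.

Lemma dist_xx x : dist x x = 0.
Proof. by apply/eqP; rewrite -leqn0 -mem_ball /= in_set1. Qed.

Lemma dist0 x y : dist x y = 0 -> y = x.
Proof.
move=> H; have: y \in ball e x 0 by rewrite mem_ball H.
by rewrite /= in_set1 => /eqP.
Qed.

Lemma dist_edge x z y : e z y -> dist x y <= (dist x z).+1.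
Proof.
move=> ezy; rewrite -mem_ball ballS; apply/orP; right; apply/existsP; exists z.
by rewrite mem_ball leqnn ezy.
Qed.

Lemma dist_pred x y k : dist x y = k.+1 -> exists z, e z y /\ dist x z = k.
Proof.
move=> H; have: y \in ball e x k.+1 by rewrite mem_ball H.
rewrite ballS mem_ball H ltnn /= => /existsP[z /andP[zb ezy]].
exists z; split=> //; move: zb; rewrite mem_ball => zk.
have := dist_edge x ezy; rewrite H ltnS => kz.
by apply/eqP; rewrite eqn_leq zk kz.
Qed.

Lemma ball_shift y z k : e y z -> ball e z k \subset ball e y k.+1.
Proof.
move=> eyz; elim: k => [|k IH].
  apply/subsetP=> w /set1P ->.
  rewrite ballS; apply/orP; right; apply/existsP; exists y.
  by rewrite eyz /= in_set1 eqxx.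
apply/subsetP=> w; rewrite ballS => /orP[H|/existsP[w' /andP[H ew]]].
  by rewrite ballS (subsetP IH _ H).
rewrite ballS; apply/orP; right; apply/existsP; exists w'.
by rewrite ew (subsetP IH _ H).
Qed.

Lemma dist_tri y z w : e y z -> dist y w <= (dist z w).+1.
Proof.
move=> eyz; rewrite -mem_ball; apply: (subsetP (ball_shift _ eyz)).
by rewrite mem_ball.
Qed.

Lemma dist_sym_le x y : dist y x <= dist x y.
Proof.
move: {2}(dist x y) (erefl (dist x y)) => k; elim: k y => [|k IH] y H.
  by rewrite (dist0 H) dist_xx.
have [z [ezy dz]] := dist_pred H.
rewrite esym in ezy.
have := IH z dz; have := dist_tri x ezy. lia.
Qed.

Lemma dist_sym x y : dist x y = dist y x.
Proof. by apply/eqP; rewrite eqn_leq !dist_sym_le. Qed.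


Lemma parent_exists x u : u != x -> exists w, e u w && (dist x w < dist x u).
Proof.
move=> ux; case Hd: (dist x u) => [|k].
  by move: (dist0 Hd) ux => ->; rewrite eqxx.
have [z [ezu dz]] := dist_pred Hd.
by exists z; rewrite esym ezu dz ltnSn.
Qed.

Definition pf x u := odflt u [pick w | e u w && (dist x w < dist x u)].

Lemma pfP x u : u != x -> e u (pf x u) && (dist x (pf x u) < dist x u).
Proof.
move=> ux; rewrite /pf; case: pickP => [w //|H].
by have [w Hw] := parent_exists ux; rewrite H in Hw.
Qed.

Definition Aset x := [set p : T * T | e p.1 p.2 && (dist x p.2 < dist x p.1)].
Definition Bset x := [set p : T * T | e p.1 p.2 && (dist x p.1 < dist x p.2)].
Definition Cset x := [set p : T * T | e p.1 p.2 && (dist x p.1 == dist x p.2)].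
Definition Iset x := [set (u, pf x u) | u in [set~ x]].

Hypothesis ecount : #|[set p : T * T | e p.1 p.2]| < 2 * #|T|.

Lemma card_I x : #|Iset x| = #|T| - 1.
Proof.
rewrite /Iset card_imset ?cardsC1 ?subn1 //.
by move=> a b [].
Qed.

Lemma I_sub_A x : Iset x \subset Aset x.
Proof.
apply/subsetP=> p /imsetP[u]; rewrite in_setC1 => ux ->.
by rewrite in_set /=; exact: pfP.
Qed.

Definition swap (p : T * T) := (p.2, p.1).

Lemma swap_inj : injective swap.
Proof. by move=> [a b] [c d] [-> ->]. Qed.

Lemma card_AB x : #|Bset x| = #|Aset x|.
Proof.
apply/eqP; rewrite eqn_leq; apply/andP; split.
  rewrite -(card_imset _ swap_inj); apply: subset_leq_card.
  apply/subsetP=> q /imsetP[[a b]]; rewrite !in_set /= => H ->.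
  by rewrite /swap /= esym.
rewrite -(card_imset _ swap_inj); apply: subset_leq_card.
apply/subsetP=> q /imsetP[[a b]]; rewrite !in_set /= => H ->.
by rewrite /swap /= esym.
Qed.

Lemma count_ABC x : #|Aset x| + #|Bset x| + #|Cset x| < 2 * #|T|.
Proof.
apply: leq_ltn_trans ecount.
have dAB : Aset x :&: Bset x = set0.
  apply/setP=> p; rewrite !in_set; apply/negbTE.
  by apply/negP=> /andP[/andP[_ H1] /andP[_ H2]]; move: H1 H2; lia.
have dABC : (Aset x :|: Bset x) :&: Cset x = set0.
  apply/setP=> p; rewrite !in_set; apply/negbTE.
  by apply/negP=> /andP[/orP[/andP[_ H1]|/andP[_ H1]] /andP[_ H2]]; move: H1 H2; lia.
have := cardsUI (Aset x) (Bset x); rewrite dAB cards0 addn0 => <-.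
have := cardsUI (Aset x :|: Bset x) (Cset x); rewrite dABC cards0 addn0 => <-.
apply: subset_leq_card; apply/subsetP=> p; rewrite !in_set.
by case/orP=> [/orP[]|] /andP[].
Qed.

Lemma A_lower x q : q \in Aset x -> q \notin Iset x -> False.
Proof.
move=> qA qI.
have H1 : #|q |: Iset x| <= #|Aset x|.
  apply: subset_leq_card; apply/subsetP=> p /setU1P[->//|]; exact: (subsetP (I_sub_A x)).
move: H1; rewrite cardsU1 qI card_I => H1.
have := count_ABC x; rewrite card_AB.
have : 0 < #|T| by apply/card_gt0P; exists q.1.
lia.
Qed.

Lemma A_ge x : #|T| - 1 <= #|Aset x|.
Proof. rewrite -(card_I x); exact: subset_leq_card (I_sub_A x). Qed.

Lemma no_same x u w : e u w -> dist x u != dist x w.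
Proof.
move=> euw; apply/negP=> /eqP H.
have uw : u != w by apply/negP=> /eqP E; move: euw; rewrite E eirr.
have H2 : 2 <= #|Cset x|.
  have -> : 2 = #|[set (u, w); (w, u)]| by rewrite cards2 xpair_eqE (negbTE uw).
  apply: subset_leq_card; apply/subsetP=> p /set2P[]->; rewrite in_set /= H eqxx andbT //.
  by rewrite esym.
have := count_ABC x; rewrite card_AB; have := A_ge x. lia.
Qed.

Lemma par_uniq x u w1 w2 : e u w1 -> dist x w1 < dist x u ->
  e u w2 -> dist x w2 < dist x u -> w1 = w2.
Proof.
have key : forall w, e u w -> dist x w < dist x u -> w = pf x u.
  move=> w euw lt; apply/eqP; apply/negPn/negP => wp.
  apply: (@A_lower x (u, w)); first by rewrite in_set /= euw lt.
  apply/negP=> /imsetP[u' _ [E1 E2]]; move: wp; by rewrite E2 E1 eqxx.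
by move=> a b c d; rewrite (key _ a b) (key _ c d).
Qed.


Lemma nbr_far x y z : 0 < dist x y -> (forall w, dist x w <= dist x y) -> e y z -> z = pf x y.
Proof.
move=> pos mx eyz.
have yx : y != x by apply/negP=> /eqP E; move: pos; rewrite E dist_xx.
have := no_same x eyz; have := mx z => H1 H2.
have lt : dist x z < dist x y by rewrite ltn_neqAle eq_sym H2 H1.
have /andP[a b] := pfP yx.
exact: (par_uniq eyz lt a b).
Qed.

Lemma leaf_far x y : 0 < dist x y -> (forall w, dist x w <= dist x y) -> degree e y = 1.
Proof.
move=> pos mx.
have yx : y != x by apply/negP=> /eqP E; move: pos; rewrite E dist_xx.
rewrite /degree (_ : [set w | e y w] = [set pf x y]) ?cards1 //.
apply/setP=> w; rewrite in_set in_set1; apply/idP/eqP => [/(nbr_far pos mx)//|->].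
by case/andP: (pfP yx).
Qed.

Lemma mem_N2 v w : (w \in N_eq e v 2) = (dist v w == 2).
Proof. rewrite /N_eq in_setD !mem_ball; lia. Qed.

Lemma mem_N4 v w : (w \in N_ge e v 4) = (4 <= dist v w).
Proof. rewrite /N_ge in_setC !mem_ball; lia. Qed.

Lemma N2_bound x y : 4 <= dist x y -> (forall w, dist x w <= dist x y) ->
  #|N_eq e y 2| <= #|N_ge e x 4|.
Proof.
move=> D4 mx.
have pos : 0 < dist x y by lia.
have yx : y != x by apply/negP=> /eqP E; move: pos; rewrite E dist_xx.
set u := pf x y.
have /andP[eyu ltu] := pfP yx.
have Du : dist x y <= (dist x u).+1 by apply: dist_edge; rewrite esym.
have ux : u != x by apply/negP=> /eqP E; move: Du; rewrite E dist_xx; lia.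
set p := pf x u.
have sub : N_eq e y 2 :\ p \subset N_ge e x 4 :\ y.
  apply/subsetP=> w; rewrite !in_setD1 mem_N2 mem_N4 => /andP[wp /eqP d2].
  have [z [ezw dz]] := dist_pred d2.
  have [y' [ey'z dy']] := dist_pred dz.
  move: ey'z; rewrite (dist0 dy') => eyz.
  have zu : z = u := nbr_far pos mx eyz.
  rewrite zu in ezw.
  have wy : w != y by apply/negP=> /eqP E; move: d2; rewrite E dist_xx.
  rewrite wy /=.
  have ns := no_same x ezw.
  have h1 : dist x u <= (dist x w).+1 by apply: dist_edge; rewrite esym.
  case: (ltngtP (dist x w) (dist x u)) => [lt|gt|eq].
  - have /andP[a b] := pfP ux.
    by move: wp; rewrite (par_uniq ezw lt a b) eqxx.
  - lia.
  - by move: ns; rewrite eq eqxx.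
have := subset_leq_card sub.
rewrite (cardsD1 p (N_eq e y 2)) (cardsD1 y (N_ge e x 4)) mem_N4.
rewrite D4 /=; case: (p \in _); lia.
Qed.

End Tree.

Local Open Scope ring_scope.

Theorem mainTheorem15 (T : finType) (e : rel T) :
  is_tree e -> (7 <= #|T|)%N ->
  (forall v : T, is_leaf e v ->
     ((#|N_eq e v 2|)%:Z > (uphalf #|T|)%:Z - 4) /\
     ((#|N_ge e v 4|)%:Z < (#|N_eq e v 2|)%:Z + 4 - (uphalf #|T|)%:Z)) ->
  diam_le e 3.
Proof.
move=> [[esym eirr] [conn [npos ned]]] n7 Hleaf.
have ecount : (#|[set p : T * T | e p.1 p.2]| < 2 * #|T|)%N.
  move: ned; rewrite /n_edges => H.
  have : (#|[set p : T * T | e p.1 p.2]| %/ 2 < #|T|)%N by rewrite H; lia.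
  by rewrite ltn_divLR // mulnC.
have h4 : (4 <= uphalf #|T|)%N.
  rewrite uphalfE; have := @half_leq 8 (#|T|.+1); apply; lia.
case: (boolP [forall x, forall y, y \in ball e x 3]) => [/forallP H x y|].
  by have /forallP := H x; apply.
rewrite negb_forall => /existsP[x0]; rewrite negb_forall => /existsP[y0 Hy0].
have [[x y] _ Hmax] := @arg_maxnP (T * T)%type (x0, y0) xpredT
   (fun p => dist conn p.1 p.2) isT.
simpl in Hmax.
have D4 : (4 <= dist conn x y)%N.
  have := Hmax (x0, y0) isT; move: Hy0; rewrite mem_ball /=; lia.
have mx : forall w, (dist conn x w <= dist conn x y)%N by move=> w; exact: (Hmax (x, w)).
have my : forall w, (dist conn y w <= dist conn y x)%N.
  by move=> w; rewrite (dist_sym esym conn y x); exact: (Hmax (y, w)).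
have D4' : (4 <= dist conn y x)%N by rewrite (dist_sym esym conn y x).
have p1 : (0 < dist conn x y)%N by lia.
have p2 : (0 < dist conn y x)%N by lia.
have Ly := leaf_far esym eirr ecount p1 mx.
have Lx := leaf_far esym eirr ecount p2 my.
have B1 := N2_bound esym eirr ecount D4 mx.
have B2 := N2_bound esym eirr ecount D4' my.
have [_ Hx] := Hleaf x Lx.
have [_ Hy] := Hleaf y Ly.
move: Hx Hy B1 B2 h4.
set a := #|N_eq e x 2|; set b := #|N_eq e y 2|.
set c := #|N_ge e x 4|; set d := #|N_ge e y 4|; set h := uphalf #|T|.
lia.
Qed.
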